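(* Let $G=(V,E)$ be a locally finite, connected, infinite graph. Then $p_{\mathrm{cut,E}}\le p_{\mathrm{cut,V}}$. If moreover $G$ has bounded degree, then $p_{\mathrm{cut,E}}=p_{\mathrm{cut,V}}$.
   Context: Fix a vertex $x$ (the thresholds do not depend on $x$). Consider Bernoulli$(p)$ bond percolation on $G$ (each edge open independently with probability $p$), with law $\mathbb{P}_p$, expectation $\mathbb{E}_p$, and open cluster $C(x)$ of $x$. A vertex cutset separating $x$ from infinity is a set $\Pi_V\subset V$ such that the connected component of $x$ in $G$ with the vertices of $\Pi_V$ deleted is finite; an edge cutset is a set $\Pi_E\subset E$ such that the component of $x$ in $G$ with the edges of $\Pi_E$ deleted is finite. Define $p_{\mathrm{cut,E}}=\sup\{p\ge0:\inf_{\Pi_E}\mathbb{E}_p[|C(x)\cap\Pi_E|]=0\}$, where $C(x)\cap\Pi_E$ is the set of edges of $C(x)$ lying in $\Pi_E$ and the infimum is over all edge cutsets separating $x$ from infinity, and $p_{\mathrm{cut,V}}=\sup\{p\ge0:\inf_{\Pi_V}\mathbb{E}_p[|C(x)\cap\Pi_V|]=0\}$, where $C(x)\cap\Pi_V$ is the set of vertices of $C(x)$ in $\Pi_V$ and the infimum is over all vertex cutsets separating $x$ from infinity. *)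

(* Defs.v *)
From HB Require Import structures.
From mathcomp Require Import all_boot all_order all_algebra.
From mathcomp Require Import all_classical all_reals all_analysis.
From Stdlib Require Import Relations.Relation_Operators.
From Stdlib Require List.
Import Order.TTheory GRing.Theory Num.Theory.

Set Implicit Arguments.
Unset Strict Implicit.
Unset Printing Implicit Defensive.

Local Open Scope classical_set_scope.
Local Open Scope ring_scope.

Section Graph.
Context {V : Type} (adj : V -> V -> Prop).

Definition simple_graph : Prop :=
  (forall u v, adj u v -> adj v u) /\ (forall u, ~ adj u u).

Definition locally_finite : Prop := forall v, finite_set [set w | adj v w].

Definition connected_graph : Prop := forall u v, clos_refl_trans V adj u v.

Definition bounded_degree : Prop :=
  exists D : nat, forall (v : V) (s : seq V), List.NoDup s ->
    (forall w, List.In w s -> adj v w) -> (size s <= D)%N.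

Definition is_edge (s : set V) : Prop :=
  exists u v, adj u v /\ s = [set w | w = u \/ w = v].

Definition edge := {s : set V | is_edge s}.

Definition open_adj (om : edge -> bool) (u v : V) : Prop :=
  exists e : edge, om e /\ proj1_sig e u /\ proj1_sig e v /\ u <> v.

Definition cluster (om : edge -> bool) (x : V) : set V :=
  [set y | clos_refl_trans V (open_adj om) x y].

Definition cluster_edges (om : edge -> bool) (x : V) : set edge :=
  [set e | om e /\ forall u, proj1_sig e u -> cluster om x u].

(* Pi separates x from infinity: the component of x in G minus Pi is finite
   (if x is in Pi, the relation below only yields {x}, also finite). *)
Definition vertex_cutset (x : V) (Pi : set V) : Prop :=
  finite_set [set y | clos_refl_trans V
     (fun u v => adj u v /\ ~ Pi u /\ ~ Pi v) x y].

Definition edge_cutset (x : V) (Pi : set edge) : Prop :=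
  finite_set [set y | clos_refl_trans V
     (fun u v => exists e : edge, ~ Pi e /\ proj1_sig e u /\ proj1_sig e v /\ u <> v) x y].

Context {R : realType} {d : measure_display} {Omega : measurableType d}.

(* Bernoulli(p) bond percolation realised on (Omega, P): om e w is the state
   of edge e; edges are open independently with probability p
   (product rule on every finite family of distinct edges). *)
Definition bernoulli_bond (P : probability Omega R) (om : edge -> Omega -> bool)
  (p : R) : Prop :=
  (forall e, measurable [set w | om e w]) /\
  forall (s : seq edge) (a : edge -> bool), List.NoDup s ->
    P [set w | forall e, List.In e s -> om e w = a e] =
    ((\prod_(e <- s) (if a e then p else 1 - p))%:E).

(* E_p[|C(x) /\ Pi_V|] and E_p[|C(x) /\ Pi_E|] (cardinalities in [0, +oo]) *)
Definition exp_vertex (P : probability Omega R) (om : edge -> Omega -> bool)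
  (x : V) (Pi : set V) : \bar R :=
  (\int[P]_w (\esum_(y in (cluster (fun e => om e w) x `&` Pi : set {classic V})) 1))%E.

Definition exp_edge (P : probability Omega R) (om : edge -> Omega -> bool)
  (x : V) (Pi : set edge) : \bar R :=
  (\int[P]_w (\esum_(e in (cluster_edges (fun e => om e w) x `&` Pi : set {classic edge})) 1))%E.

(* thresholds; P p, om p is the Bernoulli(p) percolation for p in [0,1] *)
Definition pcut_V (P : R -> probability Omega R) (om : R -> edge -> Omega -> bool)
  (x : V) : R :=
  sup [set p : R | 0 <= p <= 1 /\
    ereal_inf [set exp_vertex (P p) (om p) x Pi | Pi in vertex_cutset x] = 0%E].

Definition pcut_E (P : R -> probability Omega R) (om : R -> edge -> Omega -> bool)
  (x : V) : R :=
  sup [set p : R | 0 <= p <= 1 /\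
    ereal_inf [set exp_edge (P p) (om p) x Pi | Pi in edge_cutset x] = 0%E].

End Graph.

(* Main.v *)
Require Import Defs.
From HB Require Import structures.
From mathcomp Require Import all_boot all_order all_algebra.
From mathcomp Require Import all_classical all_reals all_analysis.
From Stdlib Require Import Relations.Relation_Operators Relations.Operators_Properties.
From Stdlib Require List.
From mathcomp Require Import lebesgue_measure measurable_realfun.
From mathcomp Require Import ring lra.
Import Order.TTheory GRing.Theory Num.Theory.
Local Open Scope classical_set_scope.
Local Open Scope ring_scope.

Set Implicit Arguments.
Unset Strict Implicit.
Unset Printing Implicit Defensive.
Section Reach.
Context {V : Type}.

Fixpoint reachn (Rl : V -> V -> Prop) (x : V) (n : nat) (y : V) : Prop :=
  match n with
  | 0 => x = y
  | n'.+1 => reachn Rl x n' y \/ exists z, reachn Rl x n' z /\ Rl z y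
  end.

Lemma crt_reachn Rl x y : clos_refl_trans V Rl x y <-> exists n, reachn Rl x n y.
Proof.
split.
  move/clos_rt_rtn1_iff; elim=> [|u v Ruv _ [n Hn]]; first by exists 0%N.
  by exists n.+1; right; exists u.
case=> n; elim: n y => [y /= <-|n IH y /= [/IH//|[z [/IH Hz Rzy]]]].
  exact: rt_refl.
by apply: rt_trans Hz (rt_step _ _ _ _ Rzy).
Qed.

Lemma crt_mono (R1 R2 : V -> V -> Prop) x y : (forall u v, R1 u v -> R2 u v) ->
  clos_refl_trans V R1 x y -> clos_refl_trans V R2 x y.
Proof.
move=> H; elim=> [u v /H|u|u v w _ IH1 _ IH2]; [exact: rt_step|exact: rt_refl|].
exact: rt_trans IH1 IH2.
Qed.

Context (adj : V -> V -> Prop).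

Lemma ball_finite x n : locally_finite adj -> finite_set [set y | reachn adj x n y].
Proof.
move=> lf; elim: n => [|n IH].
  by rewrite (_ : [set y | _] = [set x]) ?finite_set1 //; apply/seteqP; split=> y /=.
rewrite (_ : [set y | _] = [set y | reachn adj x n y] `|`
   \bigcup_(z in [set y | reachn adj x n y]) [set y | adj z y]).
  by rewrite finite_setU; split=> //; apply: bigcup_finite.
apply/seteqP; split=> y /=.
  by case=> [H|[z [Hz Hy]]]; [left|right; exists z].
by case=> [H|[z Hz Hy]]; [left|right; exists z].
Qed.

Lemma V_countable (x : V) : locally_finite adj -> connected_graph adj -> countable [set: V].
Proof.
move=> lf cg.
rewrite (_ : [set: V] = \bigcup_(n in [set: nat]) [set y | reachn adj x n y]).
  apply: bigcup_countable => // n _; apply: finite_set_countable; exact: ball_finite.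
apply/seteqP; split=> y // _.
by have [n Hn] := (crt_reachn adj x y).1 (cg x y); exists n.
Qed.

End Reach.
Section Edges.
Context {V : Type} (adj : V -> V -> Prop) (sg : simple_graph adj).

Lemma edge_ends (e : edge adj) : exists uv : V * V,
  adj uv.1 uv.2 /\ proj1_sig e = [set w | w = uv.1 \/ w = uv.2].
Proof. by case: e => s [u [v [h E]]]; exists (u, v). Qed.

Lemma edge_in2 (e : edge adj) a b w : proj1_sig e a -> proj1_sig e b -> a <> b ->
  proj1_sig e w -> w = a \/ w = b.
Proof.
have [[u v] [/= huv ->]] := edge_ends e.
by move=> /= [->|->] [->|->] // _ [->|->]; tauto.
Qed.

Lemma edge_set2 (e : edge adj) a b : proj1_sig e a -> proj1_sig e b -> a <> b ->
  proj1_sig e = [set w | w = a \/ w = b].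
Proof.
move=> ea eb ab; apply/seteqP; split=> w /=; first exact: edge_in2.
by case=> ->.
Qed.

Lemma edge_eq (e1 e2 : edge adj) a b : proj1_sig e1 a -> proj1_sig e1 b ->
  proj1_sig e2 a -> proj1_sig e2 b -> a <> b -> e1 = e2.
Proof.
move=> h1 h2 h3 h4 ab.
have E : proj1_sig e1 = proj1_sig e2 by rewrite (edge_set2 h1 h2 ab) (edge_set2 h3 h4 ab).
move: e1 e2 E {h1 h2 h3 h4} => [s1 p1] [s2 p2] /= E; subst s2.
by congr exist; apply: Prop_irrelevance.
Qed.

Lemma edge_adj (e : edge adj) a b : proj1_sig e a -> proj1_sig e b -> a <> b -> adj a b.
Proof.
have [[u v] [/= huv ->]] := edge_ends e.
case: sg => sym irr.
by move=> /= [->|->] [->|->] ab //; try exact: sym; exfalso; exact: ab.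
Qed.

Lemma edge_other (e : edge adj) a : proj1_sig e a -> exists b, proj1_sig e b /\ a <> b.
Proof.
have [[u v] [/= huv ->]] := edge_ends e.
case: sg => sym irr.
move=> /= [->|->]; [exists v|exists u]; split; auto.
- by move=> E; subst; exact: irr huv.
- by move=> E; subst; exact: irr huv.
Qed.

Definition mk_edge u v (h : adj u v) : edge adj :=
  exist _ [set w | w = u \/ w = v] (ex_intro _ u (ex_intro _ v (conj h erefl))).

Lemma adj_neq u v : adj u v -> u <> v.
Proof. by case: sg => _ irr h E; subst; exact: irr h. Qed.

Lemma E_countable : countable [set: V] -> countable [set: edge adj].
Proof.
move=> cV.
have cVV : countable [set: V * V].
  by rewrite -setXTT; apply: countableX.
case/countable_injP: cVV => k kinj.
pose ends (e : edge adj) : V * V := proj1_sig (cid (edge_ends e)).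
apply/countable_injP; exists (k \o ends) => e1 e2 _ _ /= /kinj.
rewrite !inE => /(_ I I).
rewrite /ends; case: cid => [[u v] [/= huv E1]]; case: cid => [[u' v'] [/= huv' E2]] [? ?].
subst u' v'.
apply: (@edge_eq _ _ u v); rewrite ?E1 ?E2 /=; auto.
exact: adj_neq.
Qed.

End Edges.

Section Meas.
Context {V : Type} (adj : V -> V -> Prop) {d' : measure_display} {T : measurableType d'}.
Context (cV : countable [set: V]) (cE : countable [set: edge adj]).
Context (c : edge adj -> T -> bool) (mc : forall e, measurable [set w | c e w]).

Lemma const_meas (P : Prop) : measurable [set _ : T | P].
Proof.
case: (pselect P) => HP.
  by rewrite (_ : [set _ | P] = setT) //; apply/seteqP; split.
by rewrite (_ : [set _ | P] = set0) //; apply/seteqP; split.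
Qed.

Lemma reach_meas (x : V) n (y : V) :
  measurable [set w | reachn (open_adj (fun e : edge adj => c e w)) x n y].
Proof.
elim: n y => [y|n IH y]; first exact: const_meas.
rewrite (_ : [set w | _] = [set w | reachn (open_adj (fun e : edge adj => c e w)) x n y] `|`
  \bigcup_(z : V) \bigcup_(e : edge adj)
   ([set w | reachn (open_adj (fun e : edge adj => c e w)) x n z] `&` [set w | c e w] `&`
    [set _ | proj1_sig e z /\ proj1_sig e y /\ z <> y])).
  apply: measurableU => //; apply: countable_bigcupT_measurable => // z.
  apply: countable_bigcupT_measurable => // e.
  by apply: measurableI; [apply: measurableI|apply: const_meas].
apply/seteqP; split=> w /=.
  case=> [H|[z [Hz [e [ce [ez [ey zy]]]]]]]; [by left|right].
  by exists z => //; exists e.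
case=> [H|[z _ [e _ [[Hz ce] [ez [ey zy]]]]]]; [by left|right].
by exists z; split => //; exists e.
Qed.

Lemma cluster_meas (x y : V) : measurable [set w | Defs.cluster (fun e : edge adj => c e w) x y].
Proof.
rewrite (_ : [set w | _] = \bigcup_n [set w | reachn (open_adj (fun e : edge adj => c e w)) x n y]).
  by apply: bigcupT_measurable => n; exact: reach_meas.
apply/seteqP; split=> w /=; rewrite /Defs.cluster /= crt_reachn.
  by case=> n Hn; exists n.
by case=> n _ Hn; exists n.
Qed.

Lemma cluster_edges_meas (x : V) (e : edge adj) :
  measurable [set w | cluster_edges (fun e : edge adj => c e w) x e].
Proof.
have [[u v] [/= huv E]] := edge_ends e.
rewrite (_ : [set w | _] = [set w | c e w] `&` [set w | Defs.cluster (fun e : edge adj => c e w) x u]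
   `&` [set w | Defs.cluster (fun e : edge adj => c e w) x v]).
  by apply: measurableI; [apply: measurableI => //|]; exact: cluster_meas.
have eu : proj1_sig e u by rewrite E; left.
have ev : proj1_sig e v by rewrite E; right.
apply/seteqP; split=> w /=; rewrite /cluster_edges /=.
  by case=> ce H; split; [split=> //|]; apply: H.
case=> [[ce Hu] Hv]; split=> // w'; rewrite E /=.
by case=> ->.
Qed.

End Meas.
Section IntEsum.
Local Open Scope ereal_scope.
Context d (T : measurableType d) (R : realType) (mu : {measure set T -> \bar R}).

Lemma esum_as_series (I : choiceType) (S : set I) (h : I -> nat)
  (hinj : {in [set: I] &, injective h}) (i0 : I) (Si0 : S i0)
  (a : I -> \bar R) (a0 : forall i, 0 <= a i) :
  \esum_(i in S) a i =
  \sum_(n <oo) (if n \in h @` S then a (xget i0 [set i | S i /\ h i = n]) else 0).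
Proof.
pose g n := xget i0 [set i | S i /\ h i = n].
have gh i : S i -> g (h i) = i.
  move=> Si; have := @xgetPex _ i0 [set j | S j /\ h j = h i] (ex_intro _ i (conj Si erefl)).
  by case=> _ /hinj; apply; rewrite inE.
rewrite (reindex_esum (h @` S) S g); last first.
  split.
  - by move=> _ [i Si <-]; rewrite /= gh.
  - by move=> n1 n2; rewrite !inE => -[i Si <-] [j Sj <-]; rewrite !gh // => ->.
  - by move=> i Si; exists (h i) => //=; [exists i|exact: gh].
rewrite -eseries_mkcond -(set_mem_set (h @` S)) nneseries_esum //.
by rewrite !set_mem_set.
Qed.

Lemma integral_esum (I : choiceType) (S : set I) (cI : countable [set: I])
  (f : I -> T -> \bar R) (mf : forall i, measurable_fun setT (f i))
  (f0 : forall i t, 0 <= f i t) :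
  \int[mu]_t (\esum_(i in S) f i t) = \esum_(i in S) \int[mu]_t f i t.
Proof.
have [->|/set0P[i0 Si0]] := eqVneq S set0.
  rewrite esum_set0; under eq_integral do rewrite esum_set0.
  exact: integral0.
case/countable_injP: cI => h hinj.
rewrite (esum_as_series hinj Si0); last by move=> i; exact: integral_ge0.
under eq_integral do rewrite (esum_as_series hinj Si0) //.
rewrite integral_nneseries //.
- apply: eq_eseriesr => n _; case: ifP => _ //.
  exact: (integral0 mu setT).
- by move=> n; case: (n \in _) => /=; [exact: mf|exact: measurable_cst].
- by move=> n t _; case: (n \in _).
Qed.

End IntEsum.
Lemma prod_eq_in (R : realType) (T : Type) (s : seq T) (F G : T -> R) :
  (forall x, List.In x s -> F x = G x) -> \prod_(x <- s) F x = \prod_(x <- s) G x.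
Proof.
elim: s => [|a s IH] H; first by rewrite !big_nil.
rewrite !big_cons H /=; last by left.
by rewrite IH // => x hx; apply: H; right.
Qed.

Lemma nodup_of (T : Type) (l : seq T) :
  exists s, List.NoDup s /\ forall x, List.In x s <-> List.In x l.
Proof.
elim: l => [|a l [s [nd H]]]; first by exists [::]; split => //; constructor.
case: (pselect (List.In a s)) => Ha.
  exists s; split => // x; rewrite H /=; split; [by right|].
  by case=> [<-|//]; rewrite -H.
exists (a :: s); split; first by constructor.
by move=> x /=; rewrite H.
Qed.

Section Indep.
Local Open Scope ereal_scope.
Context {V : Type} (adj : V -> V -> Prop) {R : realType} {d : measure_display}
  {Omega : measurableType d} (P : probability Omega R)
  (om : edge adj -> Omega -> bool) (p : R) (bb : bernoulli_bond P om p)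
  (e : edge adj).

Definition cyl (l : seq (edge adj * bool)) : set Omega :=
  [set w | forall q, List.In q l -> om q.1 w = q.2].

Definition Gcyl : set (set Omega) :=
  [set A | exists l, (forall q, List.In q l -> q.1 <> e) /\ A = cyl l].

Definition Oe : set Omega := [set w | om e w].

Lemma Gcyl_setI : setI_closed Gcyl.
Proof.
move=> A B [l1 [H1 ->]] [l2 [H2 ->]]; exists (l1 ++ l2); split.
  by move=> q /List.in_app_iff [/H1|/H2].
apply/seteqP; split=> w /=.
  by case=> h1 h2 q /List.in_app_iff [/h1|/h2].
by move=> h; split=> q hq; apply: h; apply/List.in_app_iff; [left|right].
Qed.

Lemma om_meas (f : edge adj) (b : bool) : measurable [set w | om f w = b].
Proof.
case: bb => mom _; case: b.
  rewrite (_ : [set w | om f w = true] = [set w | om f w]); first exact: mom.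
  by apply/seteqP; split=> w.
rewrite (_ : [set w | _] = ~` [set w | om f w]); first exact: measurableC.
by apply/seteqP; split=> w /=; case: (om f w).
Qed.

Lemma cyl_meas l : measurable (cyl l).
Proof.
elim: l => [|q l IH].
  rewrite (_ : cyl _ = setT) //; apply/seteqP; split=> w //= _ q [].
rewrite (_ : cyl _ = [set w | om q.1 w = q.2] `&` cyl l).
  exact: measurableI (om_meas _ _) IH.
apply/seteqP; split=> w /=.
  by move=> h; split; [apply: h; left|move=> q' hq'; apply: h; right].
by case=> h1 h2 q' [<-|/h2].
Qed.

Lemma Oe_meas : measurable Oe.
Proof. by case: bb => h _; exact: h. Qed.

Lemma P_Oe : P Oe = p%:E.
Proof.
case: bb => _ pr.
have := pr [:: e] (fun _ => true) (List.NoDup_cons _ (@List.in_nil _ e) (List.NoDup_nil _)).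
rewrite big_cons big_nil mulr1 => <-; congr (P _).
apply/seteqP; split=> w /=; first by move=> h f [<-|//].
by move=> h; apply: h; left.
Qed.

Lemma key_cyl l : (forall q, List.In q l -> q.1 <> e) ->
  P (cyl l `&` Oe) = p%:E * P (cyl l).
Proof.
move=> He.
case: (pselect (cyl l = set0)) => [->|/eqP/set0P [w0 Hw0]].
  by rewrite set0I measure0 mule0.
have [s [nd Hs]] := nodup_of (map fst l).
have Hs' f : List.In f s -> exists q, List.In q l /\ f = q.1.
  move/Hs/List.in_map_iff => [q [<- hq]]; by exists q.
have nes : ~ List.In e s by move=> /Hs'[q [hq E]]; exact: (He q hq (esym E)).
case: bb => _ pr.
have E1 : cyl l = [set w | forall f, List.In f s -> om f w = om f w0].
  apply/seteqP; split=> w /=.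
    move=> h f /Hs'[q [hq ->]]; by rewrite h // Hw0.
  move=> h q hq; rewrite h; first exact: Hw0.
  by apply/Hs; apply/List.in_map_iff; exists q.
pose a' f := if `[< f = e >] then true else om f w0.
have E2 : cyl l `&` Oe = [set w | forall f, List.In f (e :: s) -> om f w = a' f].
  rewrite E1; apply/seteqP; split=> w /=.
    case=> h1 h2 f [<-|hf]; first by rewrite /a' asboolT.
    rewrite /a' asboolF; first exact: h1.
    by move=> E; apply: nes; rewrite -E.
  move=> h; split; last first.
    by rewrite /Oe /= h; [rewrite /a' asboolT|left].
  move=> f hf; rewrite h; last by right.
  by rewrite /a' asboolF // => E; apply: nes; rewrite -E.
rewrite E2 E1 pr; last by constructor.
rewrite pr // big_cons /a' asboolT //= EFinM; congr (_ * _%:E).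
apply: prod_eq_in => f hf; rewrite asboolF // => E; apply: nes; rewrite -E //.
Qed.

Lemma Pfin (X : set Omega) : measurable X -> P X = (fine (P X))%:E.
Proof. by move=> mX; rewrite fineK //; exact: fin_num_measure. Qed.

Lemma indep (A : set Omega) : <<s Gcyl >> A ->
  d.-measurable A /\ P (A `&` Oe) = p%:E * P A.
Proof.
move=> HA.
apply: (@dynkin_induction _ (g_sigma_algebraType Gcyl) Gcyl
  (fun A : set Omega => d.-measurable A /\ P (A `&` Oe) = p%:E * P A)) => //.
- exact: Gcyl_setI.
- by split; [exact: measurableT|rewrite setTI P_Oe probability_setT mule1].
- by move=> _ [l [H ->]]; split; [exact: cyl_meas|exact: key_cyl].
- move=> S _ [mS HS]; split; first exact: measurableC.
  have mO := Oe_meas.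
  have mSO : d.-measurable (S `&` Oe) by exact: measurableI.
  have mCSO : d.-measurable (~` S `&` Oe) by apply: measurableI => //; exact: measurableC.
  have mCS : d.-measurable (~` S) by exact: measurableC.
  have E1 : P Oe = P (S `&` Oe) + P (~` S `&` Oe).
    rewrite -measureU //; last by rewrite setIACA setICr set0I.
    by rewrite -setIUl setUv setTI.
  have E2 : P setT = P S + P (~` S).
    by rewrite -measureU // ?setUv // setICr.
  move: E1 E2 HS; rewrite P_Oe probability_setT (Pfin mSO) (Pfin mCSO) (Pfin mS) (Pfin mCS).
  rewrite -!EFinD -EFinM => -[F1] [F2] [F3].
  rewrite -EFinM; congr (_%:E).
  have -> : fine (P (~` S)) = (1 - fine (P S))%R by rewrite F2; ring.
  by rewrite mulrBr mulr1 -F3 F1; ring.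
- move=> F mF tF HF; split; first by apply: bigcup_measurable => n _; exact: (HF n).1.
  rewrite setI_bigcupl measure_bigcup //; last 2 first.
    by move=> i _; apply: measurableI; [exact: (HF i).1|exact: Oe_meas].
    exact: trivIset_setIr.
  rewrite measure_bigcup //; last by move=> i _; exact: (HF i).1.
  rewrite -nneseriesZl //; apply: eq_eseriesr => n _; exact: (HF n).2.
Qed.

End Indep.
Section EsumHelp.
Local Open Scope ereal_scope.
Context {R : realType}.

Lemma esum_swap (T1 T2 : choiceType) (I : set T1) (J : set T2) (Rl : T1 -> T2 -> Prop)
  (a : T1 -> T2 -> \bar R) : (forall i j, 0 <= a i j) ->
  \esum_(i in I) \esum_(j in [set j | J j /\ Rl i j]) a i j =
  \esum_(j in J) \esum_(i in [set i | I i /\ Rl i j]) a i j.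
Proof.
move=> a0; rewrite !esum_esum //.
rewrite (reindex_esum (J `*`` (fun j => [set i | I i /\ Rl i j]))
  (I `*`` (fun i => [set j | J j /\ Rl i j])) (fun k => (k.2, k.1))) //.
split.
- by move=> [j i] /= [Jj [Ii Rij]]; split.
- by move=> [j1 i1] [j2 i2] _ _ /= [-> ->].
- by move=> [i j] /= [Ii [Jj Rij]]; exists (j, i).
Qed.

Lemma esumZn (T : choiceType) (S : set T) (a : T -> \bar R) (k : nat) :
  (forall i, 0 <= a i) ->
  \esum_(i in S) ((k%:R)%:E * a i) = (k%:R)%:E * \esum_(i in S) a i.
Proof.
move=> a0; elim: k => [|k IH].
  by rewrite mul0e; apply: esum1 => i _; rewrite mul0e.
have E (b : \bar R) : 0 <= b -> (k.+1%:R)%:E * b = (k%:R)%:E * b + b.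
  by move=> b0; rewrite -addn1 natrD EFinD ge0_muleDl // mul1e.
rewrite E; last exact: esum_ge0.
rewrite -IH -esumD //; first by apply: eq_esum => i _; rewrite E.
by move=> i _; apply: mule_ge0.
Qed.

Lemma esum_sub (T : choiceType) (S1 S2 : set T) (a : T -> \bar R) :
  (forall i, 0 <= a i) -> S1 `<=` S2 ->
  \esum_(i in S1) a i <= \esum_(i in S2) a i.
Proof.
move=> a0 sub; rewrite [leLHS]esum_mkcond [leRHS]esum_mkcond.
apply: le_esum => i _; case: ifPn => h; last by case: ifP.
by rewrite ifT //; move: h; rewrite !inE; exact: sub.
Qed.

Lemma esum_le2 (T : choiceType) (S : set T) (u v : T) (c : \bar R) : 0 <= c ->
  S `<=` [set u] `|` [set v] -> \esum_(i in S) c <= c + c.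
Proof.
move=> c0 sub.
apply: (@le_trans _ _ (\esum_(i in [set: T])
   ((if i \in [set u] then c else 0) + (if i \in [set v] then c else 0)))).
  rewrite esum_mkcond; apply: le_esum => i _.
  case: ifPn => h; last by apply: adde_ge0; case: ifP.
  move: (sub i); rewrite inE in h => /(_ h) [hu|hv].
    by rewrite ifT ?inE // leeDl //; case: ifP.
  by rewrite [X in _ <= _ + X]ifT ?inE // leeDr //; case: ifP.
rewrite esumD; last 2 first.
  by move=> i _; case: ifP.
  by move=> i _; case: ifP.
by rewrite -!esum_mkcond !esum_set1.
Qed.

Lemma sum_const_seq (T : Type) (s : seq T) (c : \bar R) : 0 <= c ->
  \sum_(z <- s) c = ((size s)%:R)%:E * c.
Proof.
move=> c0; elim: s => [|a s IH]; first by rewrite big_nil mul0e.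
by rewrite big_cons IH /= -addn1 addnC natrD EFinD ge0_muleDl // mul1e.
Qed.

Lemma esum_ge1 (T : choiceType) (S : set T) (a : T -> \bar R) (t : T) :
  (forall i, 0 <= a i) -> S t -> a t <= \esum_(i in S) a i.
Proof.
move=> a0 St; rewrite -(@esum_set1 R T t a (a0 t)); by apply: esum_sub => // i ->.
Qed.

End EsumHelp.

Section Final.
Local Open Scope ereal_scope.

Lemma inf_transfer (R : realType) (S1 S2 : set (\bar R)) (K : nat) :
  (forall b, S2 b -> 0 <= b) ->
  (forall a, S1 a -> exists2 b, S2 b & b <= (K%:R)%:E * a) ->
  ereal_inf S1 = 0 -> ereal_inf S2 = 0.
Proof.
move=> S20 h inf1.
apply/eqP; rewrite eq_le; apply/andP; split; last by apply/ereal_infP => b /S20.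
apply/lee_addgt0Pr => eps eps0; rewrite add0e.
have Kp : (0 < (K.+1)%:R :> R)%R by rewrite ltr0Sn.
have e0 : (0 < eps / (K.+1)%:R)%R by rewrite divr_gt0.
have fin : ereal_inf S1 \is a fin_num by rewrite inf1.
have [a S1a alt] := lb_ereal_inf_adherent e0 fin.
rewrite inf1 add0e in alt.
have [b S2b ble] := h a S1a.
apply: le_trans (ereal_inf_lbound S2b) _.
apply: (le_trans ble).
apply: (@le_trans _ _ ((K%:R)%:E * (eps / (K.+1)%:R)%:E)).
  by apply: lee_wpmul2l; [rewrite lee_fin|exact: ltW].
rewrite -EFinM lee_fin mulrA ler_pdivrMr //.
by rewrite mulrC ler_pM2l // ler_nat.
Qed.

Lemma sup_le_pos (R : realType) (A B : set R) :
  (forall q, A q -> (0 <= q <= 1)%R) -> (forall q, B q -> (0 <= q <= 1)%R) ->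
  (forall q, A q -> (0 < q)%R -> B q) -> (sup A <= sup B)%R.
Proof.
move=> hA hB hAB.
have ubB : has_ubound B by exists 1%R => q /hB /andP[].
have supB0 : (0 <= sup B)%R.
  case: (pselect (B !=set0)) => [[q Bq]|nB].
    have := sup_ubound ubB Bq; apply: le_trans; by case/andP: (hB q Bq).
  have -> : B = set0 by apply/seteqP; split=> q // Bq; apply: nB; exists q.
  by rewrite sup0.
case: (pselect (A !=set0)) => [nA|nA]; last first.
  have -> : A = set0 by apply/seteqP; split=> q // Aq; apply: nA; exists q.
  by rewrite sup0.
apply: ge_sup nA _ => q Aq.
case: (ltrP 0 q) => [q0|q0]; first exact: (sup_ubound ubB (hAB q Aq q0)).
exact: le_trans q0 supB0.
Qed.

End Final.


Section Main.
Local Open Scope ereal_scope.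
Context {V : Type} (adj : V -> V -> Prop) (sg : simple_graph adj)
  (lf : locally_finite adj) (cg : connected_graph adj) (x : V).
Context {R : realType} {d : measure_display} {Omega : measurableType d}
  (P : probability Omega R) (om : edge adj -> Omega -> bool) (p : R)
  (bb : bernoulli_bond P om p).

Let cV : countable [set: V] := V_countable x lf cg.
Let cE : countable [set: edge adj] := E_countable sg cV.
Let mom : forall e, measurable [set w | om e w] := bb.1.

Definition Aev (y : V) : set Omega := [set w | Defs.cluster (fun e : edge adj => om e w) x y].
Definition Eev (e : edge adj) : set Omega :=
  [set w | cluster_edges (fun e : edge adj => om e w) x e].

Lemma Aev_meas y : measurable (Aev y).
Proof. exact: (cluster_meas cV cE mom). Qed.

Lemma Eev_meas e : measurable (Eev e).
Proof. exact: (cluster_edges_meas cV cE mom). Qed.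

Lemma expV_eq (Pi : set V) : exp_vertex P om x Pi = \esum_(y in (Pi : set {classic V})) P (Aev y).
Proof.
rewrite /exp_vertex.
transitivity (\int[P]_w \esum_(y in (Pi : set {classic V})) (\1_(Aev y) w)%:E).
  apply: eq_integral => w _; rewrite esum_mkcondl; apply: eq_esum => y _.
  rewrite indicE; case: (pselect (Defs.cluster (fun e => om e w) x y)) => h.
    by rewrite !mem_set.
  by rewrite !memNset.
rewrite integral_esum //.
- by apply: eq_esum => y _; rewrite integral_indic ?setIT //; exact: Aev_meas.
- by move=> y; apply/measurable_EFinP; apply: measurable_indic; exact: Aev_meas.
Qed.

Lemma expE_eq (Pi : set (edge adj)) :
  exp_edge P om x Pi = \esum_(e in (Pi : set {classic edge adj})) P (Eev e).
Proof.
rewrite /exp_edge.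
transitivity (\int[P]_w \esum_(e in (Pi : set {classic edge adj})) (\1_(Eev e) w)%:E).
  apply: eq_integral => w _; rewrite esum_mkcondl; apply: eq_esum => e _.
  rewrite indicE; case: (pselect (cluster_edges (fun e => om e w) x e)) => h.
    by rewrite !mem_set.
  by rewrite !memNset.
rewrite integral_esum //.
- by apply: eq_esum => e _; rewrite integral_indic ?setIT //; exact: Eev_meas.
- by move=> e; apply/measurable_EFinP; apply: measurable_indic; exact: Eev_meas.
Qed.

Lemma uniq_NoDup (T : eqType) (s : seq T) : uniq s -> List.NoDup s.
Proof.
elim: s => [|a s IH] /=; first by constructor.
case/andP=> ha hs; constructor; last exact: IH.
move=> hIn; move/negP: ha; apply.
elim: s hIn {IH hs} => // b s IH [->|h]; rewrite in_cons ?eqxx //.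
by rewrite IH ?orbT.
Qed.

Lemma In_mem (T : eqType) (s : seq T) z : List.In z s -> z \in s.
Proof. by elim: s => // b s IH [->|/IH h]; rewrite in_cons ?eqxx // h orbT. Qed.

Definition PiE_of (PiV : set V) : set (edge adj) :=
  [set e | exists y, PiV y /\ proj1_sig e y].

Lemma cutV_E PiV : vertex_cutset adj x PiV -> edge_cutset x (PiE_of PiV).
Proof.
rewrite /vertex_cutset /edge_cutset => fin; apply: sub_finite_set fin => y /=.
apply: crt_mono => u v [e [nE [eu [ev uv]]]]; split. exact: (@edge_adj V adj sg e u v eu ev uv).
by split=> h; apply: nE; [exists u|exists v].
Qed.

Lemma edges_at_bound (D : nat) (hD : forall (v : V) (s : seq V), List.NoDup s ->
    (forall w, List.In w s -> adj v w) -> (size s <= D)%N)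
  (y : V) (c : \bar R) : 0 <= c ->
  \esum_(e in [set e : {classic edge adj} | proj1_sig e y]) c <= (D%:R)%:E * c.
Proof.
move=> c0.
pose other (e : {classic edge adj}) : {classic V} := xget (y : {classic V}) [set z : {classic V} | proj1_sig e z /\ z <> y].
have oth e : proj1_sig e y -> proj1_sig e (other e) /\ other e <> y.
  move=> ey; have [b [eb yb]] := edge_other sg ey.
  have := @xgetPex _ (y : {classic V}) [set z : {classic V} | proj1_sig e z /\ z <> y] (ex_intro _ b (conj eb (nesym yb))).
  by [].
have oinj : set_inj [set e : {classic edge adj} | proj1_sig e y] other.
  move=> e1 e2; rewrite !inE /= => h1 h2 E.
  case: (oth _ h1) => o1 n1; case: (oth _ h2) => o2 n2.
  rewrite E in o1 n1.
  exact: (edge_eq h1 o1 h2 o2 (nesym n2)).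
have := esum_image _ other (fun=> c) oinj; move=> /= <-.
apply: (@le_trans _ _ (\esum_(z in [set z : {classic V} | adj y z]) c)).
  apply: esum_sub => // _ [e ey <-]; case: (oth _ ey) => o n.
  exact: (edge_adj sg ey o (nesym n)).
rewrite esum_fset; [|exact: lf|by move=> *].
rewrite fsbig_finite /=; last exact: lf.
rewrite sum_const_seq //; apply: lee_wpmul2r => //; rewrite lee_fin ler_nat.
apply: (hD y); first by apply: (@uniq_NoDup {classic V}); exact: finmap.fset_uniq.
move=> w hw; have := @In_mem {classic V} _ w hw.
rewrite in_fset_set; last exact: lf.
by rewrite inE.
Qed.

Lemma boundE (D : nat) (hD : forall (v : V) (s : seq V), List.NoDup s ->
    (forall w, List.In w s -> adj v w) -> (size s <= D)%N) PiV :
  exp_edge P om x (PiE_of PiV) <= (D%:R)%:E * exp_vertex P om x PiV.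
Proof.
rewrite expE_eq expV_eq.
apply: (@le_trans _ _ (\esum_(e in (PiE_of PiV : set {classic edge adj}))
   \esum_(y in [set y : {classic V} | PiV y /\ proj1_sig e y]) P (Aev y))).
  apply: le_esum => e [y [Vy ey]].
  apply: (@le_trans _ _ (P (Aev y))).
    apply: le_measure; rewrite ?inE; [exact: Eev_meas|exact: Aev_meas|].
    by move=> w [_ H]; apply: H.
  by apply: (@esum_ge1 R {classic V} _ (fun y => P (Aev y)) y); [move=> i; exact: measure_ge0|split].
rewrite (@esum_swap R {classic edge adj} {classic V} (PiE_of PiV) PiV
   (fun e y => proj1_sig e y) (fun _ y => P (Aev y))); last by move=> *; exact: measure_ge0.
rewrite -esumZn //; apply: le_esum => y Vy.
apply: le_trans (edges_at_bound hD y (measure_ge0 _ _)).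
by apply: esum_sub => // e [].
Qed.

Definition PiV_of (PiE : set (edge adj)) : set V :=
  [set y | y <> x /\ exists e, PiE e /\ proj1_sig e y].

Lemma cutE_V PiE : edge_cutset x PiE -> vertex_cutset adj x (PiV_of PiE).
Proof.
rewrite /vertex_cutset /edge_cutset => fin; apply: sub_finite_set fin => y /=.
apply: crt_mono => u v [a [nu nv]]; exists (mk_edge a); split; last first.
  split; [by left|split; [by right|exact: (adj_neq sg a)]].
move=> He; apply: (adj_neq sg a).
have Hu : u = x.
  case: (pselect (u = x)) => // hu; exfalso; apply: nu; split => //.
  by exists (mk_edge a); split => //; left.
have Hv : v = x.
  case: (pselect (v = x)) => // hv; exfalso; apply: nv; split => //.
  by exists (mk_edge a); split => //; right.
by rewrite Hu Hv.
Qed.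

Lemma mulSn_e (N : nat) (a : \bar R) : 0 <= a -> (N.+1%:R)%:E * a = (N%:R)%:E * a + a.
Proof. by move=> a0; rewrite -addn1 natrD EFinD ge0_muleDl // mul1e. Qed.

Lemma Ay_bound (N : nat) (hN : (1 <= N%:R * p)%R) y e : proj1_sig e y ->
  P (Aev y) <= (N.+1%:R)%:E * P (Eev e).
Proof.
move=> ey.
pose c' f w := om f w && `[< f <> e >].
have mc' f : measurable [set w | c' f w].
  case: (pselect (f = e)) => [->|hf].
    rewrite (_ : [set w | _] = set0); first exact: measurable0.
    by apply/seteqP; split=> w //=; rewrite /c' asboolF ?andbF // => /(_ erefl).
  rewrite (_ : [set w | _] = [set w | om f w]); first exact: mom.
  by apply/seteqP; split=> w /=; rewrite /c' asboolT ?andbT.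
have mc'' f : measurable ([set w | c' f w] : set (g_sigma_algebraType (Gcyl om e))).
  case: (pselect (f = e)) => [->|hf].
    rewrite (_ : [set w | _] = set0); first exact: measurable0.
    by apply/seteqP; split=> w //=; rewrite /c' asboolF ?andbF // => /(_ erefl).
  apply: sub_sigma_algebra; exists [:: (f, true)]; split.
    by move=> q [<-|[]].
  apply/seteqP; split=> w /=; rewrite /c' asboolT ?andbT //.
    by move=> h q [<-|[]].
  by move=> h; apply: (h (f, true)); left.
pose B := [set w | Defs.cluster (fun f => c' f w) x y].
have mB : measurable B := cluster_meas cV cE mc' x y.
have gB : <<s Gcyl om e >> B :=
  @cluster_meas _ _ _ (g_sigma_algebraType (Gcyl om e)) cV cE c' mc'' x y.
have [_ HB] := indep bb gB.
have mE := Eev_meas e; have mA := Aev_meas y; have mO := Oe_meas bb e.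
have Bsub w z : Defs.cluster (fun f => c' f w) x z -> Defs.cluster (fun f => om f w) x z.
  apply: crt_mono => u v [f [cf rest]]; exists f; split => //.
  by move: cf; rewrite /c' => /andP[].
have sub1 : Aev y `<=` B `|` Eev e.
  move=> w; rewrite /Aev /= => H.
  suff : Defs.cluster (fun f => c' f w) x y \/ Eev e w by [].
  move: H; rewrite /Defs.cluster => /clos_rt_rtn1_iff H.
  elim: H => [|u v Huv Hxu IH]; first by left; exact: rt_refl.
  case: IH => [Bu|Ee]; last by right.
  case: Huv => f [omf [fu [fv uv]]].
  have Au : Defs.cluster (fun f => om f w) x u by apply/clos_rt_rtn1_iff.
  case: (pselect (f = e)) => [fe|fne].
    right; subst f; split => // z ez.
    case: (edge_in2 fu fv uv ez) => ->; first exact: Au.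
    by apply: rt_trans Au (rt_step _ _ _ _ _); exists e.
  left; apply: rt_trans Bu (rt_step _ _ _ _ _); exists f; split => //.
  by rewrite /c' omf asboolT.
have sub2 : B `&` Oe om e `<=` Eev e.
  move=> w [Bw Ow]; split => // z ez.
  have Ay := Bsub _ _ Bw.
  case: (pselect (z = y)) => [->//|zy].
  by apply: rt_trans Ay (rt_step _ _ _ _ _); exists e; split => //; split => //; split => //; exact: nesym.
have h1 : P (Aev y) <= P B + P (Eev e).
  apply: le_trans (measureU2 _ mB mE).
  by apply: le_measure => //; rewrite inE //; exact: measurableU.
have h2 : P B <= (N%:R)%:E * P (Eev e).
  apply: (@le_trans _ _ ((N%:R * p)%:E * P B)).
    rewrite -[leLHS]mul1e; apply: lee_wpmul2r; [exact: measure_ge0|by rewrite lee_fin].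
  rewrite EFinM -muleA -HB; apply: lee_wpmul2l; first by rewrite lee_fin.
  by apply: le_measure => //; rewrite inE //; exact: measurableI.
apply: le_trans h1 _; rewrite mulSn_e; last exact: measure_ge0.
exact: leeD.
Qed.

Lemma two_e (a : \bar R) : 0 <= a -> a + a = (2%:R)%:E * a.
Proof. by move=> a0; rewrite -[2%N]/(1 + 1)%N natrD EFinD ge0_muleDl // mul1e. Qed.

Lemma boundV (N : nat) (hN : (1 <= N%:R * p)%R) PiE :
  exp_vertex P om x (PiV_of PiE) <= ((N.+1 * 2)%:R)%:E * exp_edge P om x PiE.
Proof.
rewrite expV_eq expE_eq.
apply: (@le_trans _ _ (\esum_(y in (PiV_of PiE : set {classic V})) (N.+1%:R)%:E *
   \esum_(e in [set e : {classic edge adj} | PiE e /\ proj1_sig e y]) P (Eev e))).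
  apply: le_esum => y [yx [e [Pe ey]]].
  apply: le_trans (Ay_bound hN ey) _; apply: lee_wpmul2l => //.
  by apply: (@esum_ge1 R {classic edge adj} _ (fun e => P (Eev e)) e); [move=> i; exact: measure_ge0|split].
rewrite esumZn; last by move=> i; apply: esum_ge0 => *; exact: measure_ge0.
rewrite (@esum_swap R {classic V} {classic edge adj} (PiV_of PiE) PiE
   (fun y e => proj1_sig e y) (fun _ e => P (Eev e))); last by move=> *; exact: measure_ge0.
rewrite natrM EFinM -muleA; apply: lee_wpmul2l => //.
rewrite -esumZn; last by move=> *; exact: measure_ge0.
apply: le_esum => e _.
have [[u v] [huv E]] := edge_ends e.
rewrite -two_e; last exact: measure_ge0.
apply: (@esum_le2 R {classic V} _ u v (P (Eev e)) (measure_ge0 _ _)).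
by move=> y [_ ey]; move: ey; rewrite E /= => -[->|->]; [left|right].
Qed.

Lemma EtoV : (0 < p)%R ->
  ereal_inf [set exp_edge P om x Pi | Pi in edge_cutset x] = 0 ->
  ereal_inf [set exp_vertex P om x Pi | Pi in vertex_cutset adj x] = 0.
Proof.
move=> p0.
pose N := Num.Def.archi_bound (p^-1).
have hN : (1 <= N%:R * p)%R.
  have pi0 : (0 <= p^-1)%R by rewrite invr_ge0 ltW.
  have H := Num.Theory.archi_boundP pi0.
  rewrite -[X in (X <= _)%R](mulVf (lt0r_neq0 p0)); apply: ler_wpM2r; first exact: ltW p0.
  exact: ltW H.
apply: (inf_transfer (K := (N.+1 * 2)%N)).
- move=> _ [Pi _ <-]; rewrite expV_eq; apply: esum_ge0 => *; exact: measure_ge0.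
- move=> _ [Pi cut <-]; exists (exp_vertex P om x (PiV_of Pi)).
    by exists (PiV_of Pi) => //; exact: cutE_V.
  exact: boundV.
Qed.

Lemma VtoE (D : nat) (hD : forall (v : V) (s : seq V), List.NoDup s ->
    (forall w, List.In w s -> adj v w) -> (size s <= D)%N) :
  ereal_inf [set exp_vertex P om x Pi | Pi in vertex_cutset adj x] = 0 ->
  ereal_inf [set exp_edge P om x Pi | Pi in edge_cutset x] = 0.
Proof.
apply: (inf_transfer (K := D)).
- move=> _ [Pi _ <-]; rewrite expE_eq; apply: esum_ge0 => *; exact: measure_ge0.
- move=> _ [Pi cut <-]; exists (exp_edge P om x (PiE_of Pi)).
    by exists (PiE_of Pi) => //; exact: cutV_E.
  exact: boundE.
Qed.

End Main.

Theorem lemma2p1 (R : realType) (V : Type) (adj : V -> V -> Prop) (x : V)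
  (d : measure_display) (Omega : measurableType d)
  (P : R -> probability Omega R) (om : R -> edge adj -> Omega -> bool) :
  simple_graph adj -> locally_finite adj -> connected_graph adj ->
  infinite_set [set: V] ->
  (forall p : R, 0 <= p <= 1 -> bernoulli_bond (P p) (om p) p) ->
  pcut_E P om x <= pcut_V P om x /\
  (bounded_degree adj -> pcut_E P om x = pcut_V P om x).
Proof.
move=> sg lf cg _ hbb.
have EV : pcut_E P om x <= pcut_V P om x.
  apply: sup_le_pos; [by move=> q []|by move=> q []|].
  move=> q [q01 hq] q0; split => //.
  exact: (EtoV sg lf cg (hbb q q01) q0 hq).
split => // -[D hD]; apply/le_anti; rewrite EV /=.
apply: sup_le_pos; [by move=> q []|by move=> q []|].
move=> q [q01 hq] _; split => //.
exact: (VtoE sg lf cg (hbb q q01) hD hq).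
Qed.
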